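(* Let $\langle W,\varphi,(Y,\mathbb S,\sigma)\rangle$ be a monotone one-dimensional cocycle, $W\subseteq\mathbb R$ an open interval, with skew-product system $(X,\mathbb S_+,\pi)$, $h=\mathrm{pr}_2$, and $\tau\in\mathbb S_+$, $\tau>0$. Assume: (1) $u_1<u_2$ implies $\varphi(k\tau,u_1,y)<\varphi(k\tau,u_2,y)$ for all $k\in\mathbb N$, $y\in Y$; (2) $x_0\in X$ is positively Lagrange stable; (3) $y_0:=h(x_0)$ is asymptotically $\tau$-periodic, with $q:=\lim_{k\to\infty}\sigma(k\tau,y_0)$; (4) every $\tau$-periodic point $(u,q)$ of $(X,\mathbb S_+,\pi)$ is positively asymptotically stable. Then $x_0$ is asymptotically $\tau$-periodic.
   Context: Setting: $\mathbb S=\mathbb R$ or $\mathbb Z$; $(Y,\mathbb S,\sigma)$ two-sided dynamical system on a complete metric space; monotone cocycle $\varphi:\mathbb S_+\times W\times Y\to W$ (continuous, $\varphi(0,u,y)=u$, $\varphi(t+s,u,y)=\varphi(t,\varphi(s,u,y),\sigma(s,y))$, order preserving in $u$); skew-product $\pi(t,(u,y))=(\varphi(t,u,y),\sigma(t,y))$ on $X=W\times Y$. Positively Lagrange stable: $\{\pi(t,x_0):t\ge0\}$ precompact. $y_0$ asymptotically $\tau$-periodic: exists $q$ with $\sigma(\tau,q)=q$ and $\rho(\sigma(t,y_0),\sigma(t,q))\to0$. A $\tau$-periodic point $(u_0,q)$ (i.e. $\varphi(\tau,u_0,q)=u_0$) is positively asymptotically stable if (a) for every $\varepsilon>0$ there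 is $\delta>0$ with $|u-u_0|<\delta\Rightarrow|\varphi(t,u,q)-\varphi(t,u_0,q)|<\varepsilon$ for all $t\ge0$, and (b) there is $\gamma>0$ with $|\varphi(t,u,q)-\varphi(t,u_0,q)|\to0$ as $t\to\infty$ for all $|u-u_0|<\gamma$. $x_0$ is asymptotically $\tau$-periodic if there is $p$ with $\pi(\tau,p)=p$ and $\rho(\pi(t,x_0),\pi(t,p))\to0$. *)

(* Defs.v *)
From Stdlib Require Import Reals.
Open Scope R_scope.

(* disc = false : S = R ;  disc = true : S = Z (integers viewed inside R). *)
Definition inS (disc : bool) (t : R) : Prop :=
  if disc then exists z : Z, t = IZR z else True.

Definition inSp (disc : bool) (t : R) : Prop := inS disc t /\ 0 <= t.

(* a = None means -oo, b = None means +oo. *)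
Definition inW (a b : option R) (u : R) : Prop :=
  match a with Some a' => a' < u | None => True end /\
  match b with Some b' => u < b' | None => True end.

Definition is_metric {Y : Type} (d : Y -> Y -> R) : Prop :=
  (forall x y, 0 <= d x y) /\
  (forall x y, d x y = 0 <-> x = y) /\
  (forall x y, d x y = d y x) /\
  (forall x y z, d x z <= d x y + d y z).

Definition is_complete {Y : Type} (d : Y -> Y -> R) : Prop :=
  forall s : nat -> Y,
    (forall eps, 0 < eps -> exists N, forall m n, (N <= m)%nat -> (N <= n)%nat ->
        d (s m) (s n) < eps) ->
    exists l, forall eps, 0 < eps -> exists N, forall n, (N <= n)%nat -> d (s n) l < eps.

Definition is_dyn_system {Y : Type} (disc : bool) (d : Y -> Y -> R)
    (sigma : R -> Y -> Y) : Prop :=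
  (forall y, sigma 0 y = y) /\
  (forall t s y, inS disc t -> inS disc s -> sigma (t + s) y = sigma t (sigma s y)) /\
  (forall t y, inS disc t -> forall eps, 0 < eps -> exists delta, 0 < delta /\
     forall t' y', inS disc t' -> Rabs (t' - t) < delta -> d y' y < delta ->
       d (sigma t' y') (sigma t y) < eps).

Definition is_monotone_cocycle {Y : Type} (disc : bool) (d : Y -> Y -> R)
    (a b : option R) (sigma : R -> Y -> Y) (phi : R -> R -> Y -> R) : Prop :=
  (forall t u y, inSp disc t -> inW a b u -> inW a b (phi t u y)) /\
  (forall u y, inW a b u -> phi 0 u y = u) /\
  (forall t s u y, inSp disc t -> inSp disc s -> inW a b u ->
     phi (t + s) u y = phi t (phi s u y) (sigma s y)) /\
  (forall t u y, inSp disc t -> inW a b u -> forall eps, 0 < eps ->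
     exists delta, 0 < delta /\
     forall t' u' y', inSp disc t' -> inW a b u' ->
       Rabs (t' - t) < delta -> Rabs (u' - u) < delta -> d y' y < delta ->
       Rabs (phi t' u' y' - phi t u y) < eps) /\
  (forall t u1 u2 y, inSp disc t -> inW a b u1 -> inW a b u2 -> u1 <= u2 ->
     phi t u1 y <= phi t u2 y).

Definition skew {Y : Type} (sigma : R -> Y -> Y) (phi : R -> R -> Y -> R)
    (t : R) (x : R * Y) : R * Y :=
  (phi t (fst x) (snd x), sigma t (snd x)).

Definition rhoX {Y : Type} (d : Y -> Y -> R) (x x' : R * Y) : R :=
  Rabs (fst x - fst x') + d (snd x) (snd x').

Definition tends_to_0_Sp (disc : bool) (f : R -> R) : Prop :=
  forall eps, 0 < eps -> exists T, forall t, inSp disc t -> T <= t -> Rabs (f t) < eps.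

Definition precompactX {Y : Type} (d : Y -> Y -> R) (a b : option R)
    (A : R * Y -> Prop) : Prop :=
  forall s : nat -> R * Y, (forall n, A (s n)) ->
    exists (g : nat -> nat) (l : R * Y),
      (forall n, (g n < g (S n))%nat) /\ inW a b (fst l) /\
      forall eps, 0 < eps -> exists N, forall n, (N <= n)%nat ->
        rhoX d (s (g n)) l < eps.

Definition pos_Lagrange_stable {Y : Type} (disc : bool) (d : Y -> Y -> R)
    (a b : option R) (sigma : R -> Y -> Y) (phi : R -> R -> Y -> R)
    (x0 : R * Y) : Prop :=
  precompactX d a b (fun x => exists t, inSp disc t /\ x = skew sigma phi t x0).

Definition asympt_periodic_Y_with {Y : Type} (disc : bool) (d : Y -> Y -> R)
    (sigma : R -> Y -> Y) (tau : R) (y0 q : Y) : Prop :=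
  sigma tau q = q /\
  tends_to_0_Sp disc (fun t => d (sigma t y0) (sigma t q)).

Definition periodic_point {Y : Type} (sigma : R -> Y -> Y) (phi : R -> R -> Y -> R)
    (tau : R) (x : R * Y) : Prop :=
  skew sigma phi tau x = x.

Definition pos_asympt_stable {Y : Type} (disc : bool) (a b : option R)
    (phi : R -> R -> Y -> R) (u0 : R) (q : Y) : Prop :=
  (forall eps, 0 < eps -> exists delta, 0 < delta /\
     forall u, inW a b u -> Rabs (u - u0) < delta ->
       forall t, inSp disc t -> Rabs (phi t u q - phi t u0 q) < eps) /\
  (exists gamma, 0 < gamma /\
     forall u, inW a b u -> Rabs (u - u0) < gamma ->
       tends_to_0_Sp disc (fun t => phi t u q - phi t u0 q)).

Definition asympt_periodic_X {Y : Type} (disc : bool) (d : Y -> Y -> R)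
    (a b : option R) (sigma : R -> Y -> Y) (phi : R -> R -> Y -> R)
    (tau : R) (x0 : R * Y) : Prop :=
  exists p : R * Y, inW a b (fst p) /\ periodic_point sigma phi tau p /\
    tends_to_0_Sp disc (fun t => rhoX d (skew sigma phi t x0) (skew sigma phi t p)).

(* Main.v *)
Require Import Defs.
From Stdlib Require Import ZArith Reals Lra Lia Classical IndefiniteDescription.
Open Scope R_scope.

Lemma inS_plus disc t s : inS disc t -> inS disc s -> inS disc (t + s).
Proof. destruct disc; simpl; auto. intros [z1 ->] [z2 ->]. exists (z1+z2)%Z. now rewrite plus_IZR. Qed.

Lemma inSp_mult disc tau k : inSp disc tau -> inSp disc (INR k * tau).
Proof.
  intros [Hs Hp]. split.
  - destruct disc; simpl in *; auto. destruct Hs as [z ->].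
    exists (Z.of_nat k * z)%Z. now rewrite mult_IZR, <- INR_IZR_INZ.
  - apply Rmult_le_pos; auto. apply pos_INR.
Qed.

Lemma inW_conv a b x y z : inW a b x -> inW a b z -> x <= y <= z -> inW a b y.
Proof.
  unfold inW; destruct a, b; intros [? ?] [? ?] ?; split; auto; lra.
Qed.

Lemma nat_large (x : R) : exists N : nat, forall n, (N <= n)%nat -> x < INR n.
Proof.
  destruct (INR_unbounded x) as [N HN]. exists N. intros n Hn.
  apply le_INR in Hn. lra.
Qed.

Lemma decomp disc tau t : inSp disc tau -> 0 < tau -> inSp disc t ->
  exists (k : nat) (s : R), inSp disc s /\ s < tau /\ t = s + INR k * tau.
Proof.
  intros [Hts Htp] Hpos [Hs Hp].
  destruct (euclidian_division t tau) as [k [r [Hr1 Hr2]]]; [lra|].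
  rewrite Rabs_right in Hr2 by lra.
  assert (Hk : (0 <= k)%Z).
  { destruct (Z.lt_ge_cases k 0) as [Hl|]; [|lia].
    assert (IZR k <= -1) by (apply IZR_le; lia). nra. }
  exists (Z.to_nat k), r. rewrite INR_IZR_INZ, Z2Nat.id by auto.
  repeat split; try lra.
  destruct disc; simpl in *; auto.
  destruct Hs as [z1 Hz1]; destruct Hts as [z2 Hz2].
  exists (z1 - k * z2)%Z. rewrite minus_IZR, mult_IZR. subst. lra.
Qed.

Lemma eq_of_small (x y : R) : (forall e, 0 < e -> Rabs (x - y) < e) -> x = y.
Proof.
  intros H. destruct (Req_dec x y); auto.
  specialize (H (Rabs (x - y))). assert (0 < Rabs (x - y)).
  { apply Rabs_pos_lt. lra. } specialize (H H1). lra.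
Qed.

Lemma incr_ge (g : nat -> nat) : (forall n, (g n < g (S n))%nat) -> forall n, (n <= g n)%nat.
Proof. intros H n; induction n; [lia|]. specialize (H n). lia. Qed.

Lemma int_cluster (sf : nat -> R) s : (forall n, exists z, sf n = IZR z) ->
  Rtopology.ValAdh sf s -> exists z, s = IZR z.
Proof.
  intros Hi Hv.
  assert (Hh : 0 < /2) by lra.
  destruct (Hv (Rtopology.disc s (mkposreal _ Hh)) 0%nat) as [p [_ Hp]].
  { exists (mkposreal _ Hh). intros y Hy; exact Hy. }
  unfold Rtopology.disc in Hp; simpl in Hp.
  destruct (Hi p) as [z1 Hz1]. exists z1.
  apply NNPP; intro Hne.
  set (r := Rmin (Rabs (s - IZR z1)) (/2)).
  assert (Hr : 0 < r).
  { unfold r. apply Rmin_glb_lt; try lra. apply Rabs_pos_lt. lra. }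
  destruct (Hv (Rtopology.disc s (mkposreal _ Hr)) 0%nat) as [p' [_ Hp']].
  { exists (mkposreal _ Hr). intros y Hy; exact Hy. }
  unfold Rtopology.disc in Hp'; simpl in Hp'.
  destruct (Hi p') as [z2 Hz2].
  assert (Hr1 : r <= Rabs (s - IZR z1)) by apply Rmin_l.
  assert (Hr2 : r <= /2) by apply Rmin_r.
  rewrite Hz1 in Hp. rewrite Hz2 in Hp'.
  assert (Habs : Rabs (IZR z2 - IZR z1) < 1).
  { replace (IZR z2 - IZR z1) with ((IZR z2 - s) + (s - IZR z1)) by ring.
    eapply Rle_lt_trans; [apply Rabs_triang|].
    rewrite (Rabs_minus_sym s). lra. }
  rewrite <- minus_IZR in Habs. apply Rabs_def2 in Habs. destruct Habs as [Ha Hb].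
  replace 1 with (IZR 1) in Ha by reflexivity.
  replace (- (1)) with (IZR (-1)) in Hb by reflexivity.
  apply lt_IZR in Ha; apply lt_IZR in Hb.
  assert (z2 = z1) by lia. subst z2.
  rewrite Rabs_minus_sym in Hp'. lra.
Qed.

Lemma small_inv (e : R) : 0 < e -> exists N : nat, forall n, (N <= n)%nat -> / (INR n + 1) < e.
Proof.
  intros He. destruct (nat_large (/ e)) as [N HN]. exists N. intros n Hn.
  specialize (HN n Hn). assert (Hp : 0 < INR n + 1) by (generalize (pos_INR n); lra).
  apply (Rmult_lt_reg_l (INR n + 1)); auto. rewrite Rinv_r by lra.
  assert (Hie : / e * e = 1) by (field; lra). nra.
Qed.

Lemma uniq_fixed (D : R -> Prop) (P : R -> R)
  (conv : forall x y z, D x -> D z -> x <= y <= z -> D y)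
  (cont : forall u, D u -> forall e, 0 < e -> exists dl, 0 < dl /\
            forall w, D w -> Rabs (w - u) < dl -> Rabs (P w - P u) < e)
  (locR : forall v, D v -> P v = v -> exists g, 0 < g /\
            forall w, D w -> v < w < v + g -> P w < w)
  (locL : forall v, D v -> P v = v -> exists g, 0 < g /\
            forall w, D w -> v - g < w < v -> w < P w) :
  forall v1 v2, D v1 -> D v2 -> P v1 = v1 -> P v2 = v2 -> v1 < v2 -> False.
Proof.
  intros v1 v2 D1 D2 F1 F2 Hlt.
  set (E := fun c => v1 <= c <= v2 /\ forall w, v1 < w <= c -> P w < w).
  assert (HB : bound E) by (exists v2; intros c [Hc _]; lra).
  assert (HE : exists x, E x) by (exists v1; split; [lra| intros; lra]).
  destruct (completeness E HB HE) as [c [Hub Hlub]].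
  assert (Hc2 : c <= v2) by (apply Hlub; intros x [Hx _]; lra).
  assert (Hc1 : v1 <= c) by (apply Hub; unfold E; split; [lra|intros; lra]).
  assert (Hi : forall w, v1 < w < c -> P w < w).
  { intros w Hw. destruct (classic (exists e, E e /\ w <= e)) as [[e [[_ He] Hwe]]|Hn].
    - apply He; lra.
    - exfalso. assert (c <= w); [|lra]. apply Hlub. intros x Hx.
      destruct (Rle_lt_dec x w); auto. exfalso; apply Hn; exists x; split; auto; lra. }
  assert (Hcv1 : v1 < c).
  { destruct (locR v1 D1 F1) as [g [Hg Hw]].
    set (e := v1 + Rmin g (v2 - v1) / 2).
    assert (Hm1 : Rmin g (v2 - v1) <= g) by apply Rmin_l.
    assert (Hm2 : Rmin g (v2 - v1) <= v2 - v1) by apply Rmin_r.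
    assert (Hm0 : 0 < Rmin g (v2 - v1)) by (apply Rmin_glb_lt; lra).
    assert (E e).
    { unfold E, e; split; [lra|]. intros w Hw'. apply Hw; [apply (conv v1 w v2); auto; lra| lra]. }
    assert (e <= c) by (apply Hub; auto). unfold e in *; lra. }
  assert (Dc : D c) by (apply (conv v1 c v2); auto).
  destruct (Rtotal_order (P c) c) as [Hlt2|[Heq|Hgt]].
  - assert (Hcv2 : c < v2) by (destruct (Req_dec c v2); [subst; lra|lra]).
    destruct (cont c Dc ((c - P c)/2)) as [dl [Hdl Hd]]; [lra|].
    set (dl' := Rmin dl ((c - P c)/2)).
    assert (Hd1 : dl' <= dl) by apply Rmin_l.
    assert (Hd2 : dl' <= (c - P c)/2) by apply Rmin_r.
    assert (Hd0 : 0 < dl') by (apply Rmin_glb_lt; lra).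
    set (e := c + Rmin dl' (v2 - c) / 2).
    assert (Hm1 : Rmin dl' (v2 - c) <= dl') by apply Rmin_l.
    assert (Hm2 : Rmin dl' (v2 - c) <= v2 - c) by apply Rmin_r.
    assert (Hm0 : 0 < Rmin dl' (v2 - c)) by (apply Rmin_glb_lt; lra).
    assert (E e).
    { unfold E, e; split; [lra|]. intros w Hw.
      destruct (Rlt_le_dec w c); [apply Hi; lra|].
      assert (Dw : D w) by (apply (conv v1 w v2); auto; lra).
      assert (Habs : Rabs (w - c) < dl) by (rewrite Rabs_right; lra).
      specialize (Hd w Dw Habs). apply Rabs_def2 in Hd. lra. }
    assert (e <= c) by (apply Hub; auto). unfold e in *; lra.
  - destruct (locL c Dc Heq) as [g [Hg Hw]].
    set (m := Rmax v1 (c - g)).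
    assert (m < c) by (unfold m; apply Rmax_lub_lt; lra).
    assert (v1 <= m) by apply Rmax_l. assert (c - g <= m) by apply Rmax_r.
    set (w := (m + c) / 2).
    assert (Dw : D w) by (apply (conv v1 w v2); auto; unfold w; lra).
    assert (H1' : w < P w) by (apply Hw; auto; unfold w; lra).
    assert (H2' : P w < w) by (apply Hi; unfold w; lra). lra.
  - destruct (cont c Dc ((P c - c)/2)) as [dl [Hdl Hd]]; [lra|].
    set (w := c - Rmin dl (c - v1) / 2).
    assert (Hm1 : Rmin dl (c - v1) <= dl) by apply Rmin_l.
    assert (Hm2 : Rmin dl (c - v1) <= c - v1) by apply Rmin_r.
    assert (Hm0 : 0 < Rmin dl (c - v1)) by (apply Rmin_glb_lt; lra).
    assert (Dw : D w) by (apply (conv v1 w v2); auto; unfold w; lra).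
    assert (Habs : Rabs (w - c) < dl) by (unfold w; rewrite Rabs_left; lra).
    specialize (Hd w Dw Habs). apply Rabs_def2 in Hd.
    assert (Hw1 : v1 < w < c) by (unfold w; lra). assert (P w < w) by (apply Hi; lra). lra.
Qed.

Lemma sup_attained (C : R -> Prop) (B : R) :
  (forall v, C v -> v <= B) -> (exists v, C v) ->
  (forall x, (forall e, 0 < e -> exists v, C v /\ Rabs (v - x) < e) -> C x) ->
  exists M, C M /\ forall v, C v -> v <= M.
Proof.
  intros HB Hne Hcl.
  destruct (completeness C (ex_intro _ B HB) Hne) as [M [Hub Hlub]].
  exists M; split; auto. apply Hcl. intros e He.
  apply NNPP; intro Hn. assert (M <= M - e); [|lra].
  apply Hlub. intros v Hv. destruct (Rle_lt_dec v (M - e)); auto.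
  exfalso; apply Hn; exists v; split; auto. assert (v <= M) by (apply Hub; auto).
  rewrite Rabs_left1; lra.
Qed.

Theorem mainTheorem11
  (disc : bool) (Y : Type) (d : Y -> Y -> R)
  (a b : option R) (sigma : R -> Y -> Y) (phi : R -> R -> Y -> R)
  (tau : R) (x0 : R * Y) (q : Y)
  (Hmetric : is_metric d) (Hcomplete : is_complete d)
  (Hdyn : is_dyn_system disc d sigma)
  (Hcoc : is_monotone_cocycle disc d a b sigma phi)
  (Htau : inSp disc tau) (Htau_pos : 0 < tau)
  (Hx0 : inW a b (fst x0))
  (H1 : forall (k : nat) (u1 u2 : R) (y : Y), inW a b u1 -> inW a b u2 -> u1 < u2 ->
          phi (INR k * tau) u1 y < phi (INR k * tau) u2 y)
  (H2 : pos_Lagrange_stable disc d a b sigma phi x0)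
  (H3 : asympt_periodic_Y_with disc d sigma tau (snd x0) q)
  (H4 : forall u : R, inW a b u -> periodic_point sigma phi tau (u, q) ->
          pos_asympt_stable disc a b phi u q) :
  asympt_periodic_X disc d a b sigma phi tau x0.
Proof.
  destruct Hmetric as [Dpos [Deq [Dsym Dtri]]].
  destruct Hdyn as [S0 [Sgrp Scont]].
  destruct Hcoc as [Cw [C0 [Ccoc [Ccont Cmon]]]].
  destruct H3 as [Hq Hy].
  destruct x0 as [u0 y0]. simpl in Hx0, Hy.
  set (U := fun k : nat => phi (INR k * tau) u0 y0).
  set (Yk := fun k : nat => sigma (INR k * tau) y0).
  set (P := fun u => phi tau u q).
  assert (Dqq : d q q = 0) by (apply Deq; auto).
  assert (Sk : forall k, inSp disc (INR k * tau)) by (intros; apply inSp_mult; auto).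
  assert (UW : forall k, inW a b (U k)) by (intros; apply Cw; auto).
  assert (Urec : forall k, U (S k) = phi tau (U k) (Yk k)).
  { intros k. unfold U, Yk. rewrite S_INR.
    replace ((INR k + 1) * tau) with (tau + INR k * tau) by ring.
    apply Ccoc; auto. }
  assert (sigq : forall k, sigma (INR k * tau) q = q).
  { induction k. simpl. rewrite Rmult_0_l. auto.
    rewrite S_INR. replace ((INR k + 1) * tau) with (tau + INR k * tau) by ring.
    rewrite Sgrp; [|apply Htau|apply Sk]. rewrite IHk; auto. }
  assert (Yconv : forall e, 0 < e -> exists N, forall k, (N <= k)%nat -> d (Yk k) q < e).
  { intros e He. destruct (Hy e He) as [T HT].
    destruct (nat_large (T / tau)) as [N HN]. exists N. intros k Hk.
    specialize (HN k Hk). specialize (HT (INR k * tau) (Sk k)).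
    rewrite sigq in HT. rewrite Rabs_right in HT by (apply Rle_ge; auto).
    apply HT. apply Rmult_lt_compat_r with (r := tau) in HN; auto.
    unfold Rdiv in HN. rewrite Rmult_assoc, Rinv_l, Rmult_1_r in HN; lra. }
  assert (PW : forall u, inW a b u -> inW a b (P u)) by (intros; apply Cw; auto).
  assert (Pcont : forall u, inW a b u -> forall e, 0 < e -> exists dl, 0 < dl /\
            forall w, inW a b w -> Rabs (w - u) < dl -> Rabs (P w - P u) < e).
  { intros u Hu e He. destruct (Ccont tau u q Htau Hu e He) as [dl [Hdl Hd]].
    exists dl; split; auto. intros w Hw Hwu. apply Hd; auto.
    rewrite Rminus_diag, Rabs_R0; auto. rewrite Dqq; auto. }
  assert (Pweak : forall u1 u2, inW a b u1 -> inW a b u2 -> u1 <= u2 -> P u1 <= P u2)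
    by (intros; apply Cmon; auto).
  assert (Iter : forall w k, inW a b w ->
     phi (INR (S k) * tau) w q = P (phi (INR k * tau) w q)).
  { intros w k Hw. rewrite S_INR.
    replace ((INR k + 1) * tau) with (tau + INR k * tau) by ring.
    rewrite Ccoc; auto. rewrite sigq. auto. }
  assert (IterW : forall w k, inW a b w -> inW a b (phi (INR k * tau) w q))
    by (intros; apply Cw; auto).
  assert (Fix : forall v k, inW a b v -> P v = v -> phi (INR k * tau) v q = v).
  { intros v k Hv Hf. induction k.
    - simpl. rewrite Rmult_0_l. auto.
    - rewrite Iter, IHk; auto. }
  assert (Tk : forall T, exists N, forall k, (N <= k)%nat -> T <= INR k * tau).
  { intros T. destruct (nat_large (T / tau)) as [N HN]. exists N. intros k Hk.
    specialize (HN k Hk). apply Rmult_lt_compat_r with (r := tau) in HN; auto.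
    unfold Rdiv in HN. rewrite Rmult_assoc, Rinv_l, Rmult_1_r in HN; lra. }
  assert (Per : forall v, P v = v -> periodic_point sigma phi tau (v, q)).
  { intros v Hv. unfold periodic_point, skew. simpl. fold (P v). rewrite Hv, Hq. auto. }
  assert (locR : forall v, inW a b v -> P v = v -> exists g, 0 < g /\          forall w, inW a b w -> v < w < v + g -> P w < w).
  { intros v Hv Hf. destruct (H4 v Hv (Per v Hf)) as [_ [g [Hg Hatt]]].
    exists g; split; auto. intros w Hw Hwv.
    destruct (Rlt_or_le (P w) w) as [|Hge]; auto. exfalso.
    assert (Hind : forall k, w <= phi (INR k * tau) w q).
    { induction k. simpl. rewrite Rmult_0_l, C0; auto; lra.
      rewrite Iter; auto. apply Rle_trans with (P w); auto. }
    assert (Hwg : Rabs (w - v) < g) by (rewrite Rabs_right; lra).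
    destruct (Hatt w Hw Hwg (w - v)) as [T HT]; [lra|].
    destruct (Tk T) as [N HN].
    specialize (HT (INR N * tau) (Sk N) (HN N (le_n N))).
    rewrite (Fix v N Hv Hf) in HT. specialize (Hind N).
    rewrite Rabs_right in HT; lra. }
  assert (locL : forall v, inW a b v -> P v = v -> exists g, 0 < g /\          forall w, inW a b w -> v - g < w < v -> w < P w).
  { intros v Hv Hf. destruct (H4 v Hv (Per v Hf)) as [_ [g [Hg Hatt]]].
    exists g; split; auto. intros w Hw Hwv.
    destruct (Rlt_or_le w (P w)) as [|Hge]; auto. exfalso.
    assert (Hind : forall k, phi (INR k * tau) w q <= w).
    { induction k. simpl. rewrite Rmult_0_l, C0; auto; lra.
      rewrite Iter; auto. apply Rle_trans with (P w); auto. }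
    assert (Hwg : Rabs (w - v) < g) by (rewrite Rabs_left; lra).
    destruct (Hatt w Hw Hwg (v - w)) as [T HT]; [lra|].
    destruct (Tk T) as [N HN].
    specialize (HT (INR N * tau) (Sk N) (HN N (le_n N))).
    rewrite (Fix v N Hv Hf) in HT. specialize (Hind N).
    rewrite Rabs_left in HT; lra. }
  assert (Uniq : forall v1 v2, inW a b v1 -> inW a b v2 -> P v1 = v1 -> P v2 = v2 -> v1 = v2).
  { intros v1 v2 D1 D2 F1 F2.
    destruct (Rtotal_order v1 v2) as [Hl|[He|Hg]]; auto; exfalso.
    - apply (uniq_fixed (inW a b) P (inW_conv a b) Pcont locR locL v1 v2); auto.
    - apply (uniq_fixed (inW a b) P (inW_conv a b) Pcont locR locL v2 v1); auto. }
  assert (PC0 : forall g0 : nat -> nat, exists (g : nat -> nat) (l : R),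
     (forall n, (n <= g n)%nat) /\ inW a b l /\
     forall e, 0 < e -> exists N, forall n, (N <= n)%nat -> Rabs (U (g0 (g n)) - l) < e).
  { intros g0.
    destruct (H2 (fun n => skew sigma phi (INR (g0 n) * tau) (u0, y0)))
      as [g [l [Hinc [HlW Hc]]]].
    { intros n. exists (INR (g0 n) * tau). split; auto. }
    exists g, (fst l). split; [apply incr_ge; auto|]. split; auto.
    intros e He. destruct (Hc e He) as [N HN]. exists N. intros n Hn.
    specialize (HN n Hn). unfold rhoX, skew in HN. simpl in HN.
    generalize (Dpos (sigma (INR (g0 (g n)) * tau) y0) (snd l)). unfold U. lra. }
  set (cluster := fun v => forall e, 0 < e -> forall N, exists k, (N <= k)%nat /\ Rabs (U k - v) < e).
  assert (PC : forall g0 : nat -> nat, (forall n, (n <= g0 n)%nat) -> exists (g : nat -> nat) (l : R),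
     (forall n, (n <= g n)%nat) /\ inW a b l /\ cluster l /\
     forall e, 0 < e -> exists N, forall n, (N <= n)%nat -> Rabs (U (g0 (g n)) - l) < e).
  { intros g0 Hg0. destruct (PC0 g0) as [g [l [Hg [HlW Hc]]]].
    exists g, l. split; [auto|]. split; [auto|]. split; [|auto]. intros e He N.
    destruct (Hc e He) as [N1 HN1]. exists (g0 (g (max N N1))). split.
    - specialize (Hg0 (g (max N N1))). specialize (Hg (max N N1)). lia.
    - apply HN1; lia. }
  assert (Bnd : exists B, forall k, Rabs (U k) <= B).
  { apply NNPP; intro Hn.
    assert (Hall : forall n : nat, exists k, INR n < Rabs (U k)).
    { intros n. apply NNPP; intro Hn2. apply Hn. exists (INR n). intros k.
      apply Rnot_lt_le. intro; apply Hn2; exists k; auto. }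
    destruct (functional_choice _ Hall) as [g0 Hg0].
    destruct (PC0 g0) as [g [l [Hg [HlW Hc]]]].
    destruct (Hc 1 Rlt_0_1) as [N HN].
    destruct (nat_large (Rabs l + 1)) as [N2 HN2].
    set (n := max N N2).
    specialize (HN n ltac:(lia)). specialize (HN2 n ltac:(lia)).
    specialize (Hg0 (g n)). assert (INR n <= INR (g n)) by (apply le_INR; auto).
    generalize (Rabs_triang_inv (U (g0 (g n))) l). lra. }
  destruct Bnd as [B HB].
  assert (ClW : forall v, cluster v -> inW a b v).
  { intros v Hv.
    assert (Hall : forall n : nat, exists k, (n <= k)%nat /\ Rabs (U k - v) < / (INR n + 1)).
    { intros n. apply Hv. apply Rinv_0_lt_compat. generalize (pos_INR n); lra. }
    destruct (functional_choice _ Hall) as [g0 Hg0].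
    destruct (PC0 g0) as [g [l [Hg [HlW Hc]]]].
    replace v with l; auto. apply eq_of_small. intros e He.
    destruct (Hc (e/2) ltac:(lra)) as [N1 HN1].
    destruct (small_inv (e/2) ltac:(lra)) as [N2 HN2].
    set (n := max N1 N2).
    specialize (HN1 n ltac:(lia)). specialize (HN2 (g n) ltac:(specialize (Hg n); lia)).
    destruct (Hg0 (g n)) as [_ Hk].
    replace (l - v) with (-(U (g0 (g n)) - l) + (U (g0 (g n)) - v)) by ring.
    eapply Rle_lt_trans; [apply Rabs_triang|]. rewrite Rabs_Ropp. lra. }
  assert (ClB : forall v, cluster v -> v <= B).
  { intros v Hv. apply Rle_trans with (Rabs v); [apply Rle_abs|].
    apply Rnot_lt_le; intro Hlt.
    destruct (Hv (Rabs v - B) ltac:(lra) 0%nat) as [k [_ Hk]].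
    generalize (Rabs_triang_inv v (U k)) (HB k). rewrite Rabs_minus_sym in Hk. lra. }
  assert (ClInv : forall v, cluster v -> cluster (P v)).
  { intros v Hv e He N. assert (HvW := ClW v Hv).
    destruct (Ccont tau v q Htau HvW e He) as [dl [Hdl Hd]].
    destruct (Yconv dl Hdl) as [N1 HN1].
    destruct (Hv dl Hdl (max N N1)) as [k [Hk Hk2]].
    exists (S k). split; [lia|]. rewrite Urec. apply Hd; auto.
    rewrite Rminus_diag, Rabs_R0; auto. apply HN1; lia. }
  assert (ClPre : forall v, cluster v -> exists w, cluster w /\ inW a b w /\ P w = v).
  { intros v Hv.
    assert (Hall : forall n : nat, exists k, (n <= k)%nat /\ Rabs (U (S k) - v) < / (INR n + 1)).
    { intros n. destruct (Hv (/ (INR n + 1)) ltac:(apply Rinv_0_lt_compat; generalize (pos_INR n); lra) (S n))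
        as [k' [Hk' Hk'2]].
      destruct k' as [|k]; [lia|]. exists k. split; auto; lia. }
    destruct (functional_choice _ Hall) as [g0 Hg0].
    destruct (PC g0 ltac:(intros n; apply Hg0)) as [g [l [Hg [HlW [Hcl Hc]]]]].
    exists l. split; auto. split; auto. apply eq_of_small. intros e He.
    destruct (Ccont tau l q Htau HlW (e/2) ltac:(lra)) as [dl [Hdl Hd]].
    destruct (Hc dl Hdl) as [N1 HN1].
    destruct (Yconv dl Hdl) as [N2 HN2].
    destruct (small_inv (e/2) ltac:(lra)) as [N3 HN3].
    set (n := max N1 (max N2 N3)).
    specialize (HN1 n ltac:(lia)). specialize (Hg n).
    destruct (Hg0 (g n)) as [Hk1 Hk2].
    specialize (HN2 (g0 (g n)) ltac:(lia)). specialize (HN3 (g n) ltac:(lia)).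
    assert (Hp : Rabs (phi tau (U (g0 (g n))) (Yk (g0 (g n))) - phi tau l q) < e/2).
    { apply Hd; auto. rewrite Rminus_diag, Rabs_R0; auto. }
    rewrite <- Urec in Hp. fold (P l) in Hp.
    replace (P l - v) with (-(U (S (g0 (g n))) - P l) + (U (S (g0 (g n))) - v)) by ring.
    eapply Rle_lt_trans; [apply Rabs_triang|]. rewrite Rabs_Ropp. lra. }
  assert (ClClosed : forall x, (forall e, 0 < e -> exists v, cluster v /\ Rabs (v - x) < e) -> cluster x).
  { intros x Hx e He N. destruct (Hx (e/2) ltac:(lra)) as [v [Hv Hvx]].
    destruct (Hv (e/2) ltac:(lra) N) as [k [Hk Hk2]]. exists k; split; auto.
    replace (U k - x) with ((U k - v) + (v - x)) by ring.
    eapply Rle_lt_trans; [apply Rabs_triang|]. lra. }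
  assert (Clne : exists v, cluster v).
  { destruct (PC (fun n => n) (fun n => le_n n)) as [g [l [_ [_ [Hcl _]]]]]. exists l; auto. }
  destruct (sup_attained cluster B ClB Clne ClClosed) as [M [HM HMmax]].
  destruct (sup_attained (fun x => cluster (- x)) B) as [m' [Hm' Hm'max]].
  { intros v Hv. apply Rle_trans with (Rabs v); [apply Rle_abs|].
    rewrite <- Rabs_Ropp. apply Rnot_lt_le; intro.
    destruct (Hv (Rabs (-v) - B) ltac:(lra) 0%nat) as [k [_ Hk]].
    generalize (Rabs_triang_inv (- v) (U k)) (HB k). rewrite Rabs_minus_sym in Hk. lra. }
  { destruct Clne as [v Hv]. exists (- v). rewrite Ropp_involutive. auto. }
  { intros x Hx. apply ClClosed. intros e He. destruct (Hx e He) as [v [Hv Hvx]].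
    exists (- v). split; auto. replace (- v - - x) with (- (v - x)) by ring.
    rewrite Rabs_Ropp; auto. }
  set (m := - m').
  assert (Hm : cluster m) by exact Hm'.
  assert (Hmmin : forall v, cluster v -> m <= v).
  { intros v Hv. assert (- v <= m'). { apply Hm'max. rewrite Ropp_involutive. auto. }
    unfold m; lra. }
  assert (MW : inW a b M) by auto. assert (mW : inW a b m) by auto.
  assert (FM : P M = M).
  { assert (P M <= M) by (apply HMmax, ClInv, HM).
    destruct (ClPre M HM) as [w [Hw [HwW Hpw]]].
    assert (w <= M) by auto. assert (P w <= P M) by (apply Pweak; auto). lra. }
  assert (Fm : P m = m).
  { assert (m <= P m) by (apply Hmmin, ClInv, Hm).
    destruct (ClPre m Hm) as [w [Hw [HwW Hpw]]].
    assert (m <= w) by auto. assert (P m <= P w) by (apply Pweak; auto). lra. }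
  assert (HmM : m = M) by (apply Uniq; auto).
  assert (Conv : forall e, 0 < e -> exists N, forall k, (N <= k)%nat -> Rabs (U k - M) < e).
  { intros e He. apply NNPP; intro Hn.
    assert (Hall : forall n : nat, exists k, (n <= k)%nat /\ ~ (Rabs (U k - M) < e)).
    { intros n. apply NNPP; intro Hn2. apply Hn. exists n. intros k Hk.
      apply NNPP; intro Hn3. apply Hn2. exists k; auto. }
    destruct (functional_choice _ Hall) as [g0 Hg0].
    destruct (PC g0 ltac:(intros n; apply Hg0)) as [g [l [Hg [HlW [Hcl Hc]]]]].
    assert (l <= M) by auto. assert (m <= l) by auto.
    assert (l = M) by lra. subst l.
    destruct (Hc e He) as [N HN]. destruct (Hg0 (g N)) as [_ HH]. apply HH, HN. lia. }
  assert (F7 : tends_to_0_Sp disc (fun t => phi t u0 y0 - phi t M q)).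
  { intros e He. apply NNPP; intro Hn.
    assert (Hall : forall n : nat, exists ks : nat * R, inSp disc (snd ks) /\ snd ks < tau /\
       (n <= fst ks)%nat /\
       ~ (Rabs (phi (snd ks + INR (fst ks) * tau) u0 y0 - phi (snd ks + INR (fst ks) * tau) M q) < e)).
    { intros n.
      assert (Ht : exists t, inSp disc t /\ INR n * tau + tau <= t /\ ~ (Rabs (phi t u0 y0 - phi t M q) < e)).
      { apply NNPP; intro Hn2. apply Hn. exists (INR n * tau + tau). intros t Ht HT.
        apply NNPP; intro Hn3. apply Hn2. exists t; auto. }
      destruct Ht as [t [Ht [HT Hne]]].
      destruct (decomp disc tau t Htau Htau_pos Ht) as [k [s [Hs [Hst Heq]]]].
      exists (k, s). simpl. split; auto. split; auto. split.
      - destruct (le_lt_dec n k) as [|Hlt]; auto. exfalso.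
        apply le_INR in Hlt. rewrite S_INR in Hlt. destruct Hs as [_ Hs0]. nra.
      - rewrite <- Heq. auto. }
    destruct (functional_choice _ Hall) as [f Hf].
    set (sf := fun n => snd (f n)).
    destruct (Rtopology.Bolzano_Weierstrass sf (fun c => 0 <= c <= tau) (Rtopology.compact_P3 0 tau))
      as [s Hadh].
    { intros n. unfold sf. destruct (Hf n) as [[_ H0] [H' _]]. lra. }
    assert (Hs0 : 0 <= s).
    { apply Rnot_lt_le; intro Hlt.
      assert (Hp : 0 < - s) by lra.
      destruct (Hadh (Rtopology.disc s (mkposreal _ Hp)) 0%nat) as [p [_ Hpp]].
      { exists (mkposreal _ Hp). intros y Hy'; exact Hy'. }
      unfold Rtopology.disc in Hpp; simpl in Hpp.
      destruct (Hf p) as [[_ H0] _]. unfold sf in Hpp. apply Rabs_def2 in Hpp. lra. }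
    assert (HsS : inS disc s).
    { destruct disc; simpl; [|exact I].
      apply (int_cluster sf s); auto. intros n. destruct (Hf n) as [[Hz _] _]. exact Hz. }
    destruct (Ccont s M q (conj HsS Hs0) MW (e/2) ltac:(lra)) as [dl [Hdl Hd]].
    destruct (Yconv dl Hdl) as [N1 HN1].
    destruct (Conv dl Hdl) as [N2 HN2].
    destruct (Hadh (Rtopology.disc s (mkposreal _ Hdl)) (max N1 N2)) as [p [Hp Hpp]].
    { exists (mkposreal _ Hdl). intros y Hy'; exact Hy'. }
    unfold Rtopology.disc in Hpp; simpl in Hpp.
    destruct (Hf p) as [HsSp [Hslt [Hkp Hne]]].
    fold (sf p) in HsSp, Hslt, Hne, Hpp.
    set (k := fst (f p)) in *.
    apply Hne.
    rewrite (Ccoc (sf p) (INR k * tau) u0 y0 HsSp (Sk k) Hx0).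
    rewrite (Ccoc (sf p) (INR k * tau) M q HsSp (Sk k) MW).
    rewrite (Fix M k MW FM), sigq.
    fold (U k). fold (Yk k).
    assert (A1 : Rabs (phi (sf p) (U k) (Yk k) - phi s M q) < e/2).
    { apply Hd; auto. apply HN2; lia. apply HN1; lia. }
    assert (A2 : Rabs (phi (sf p) M q - phi s M q) < e/2).
    { apply Hd; auto. rewrite Rminus_diag, Rabs_R0; auto. rewrite Dqq; auto. }
    replace (phi (sf p) (U k) (Yk k) - phi (sf p) M q) with
      ((phi (sf p) (U k) (Yk k) - phi s M q) - (phi (sf p) M q - phi s M q)) by ring.
    eapply Rle_lt_trans; [apply Rabs_triang|]. rewrite Rabs_Ropp. lra. }
  exists (M, q). simpl. split; auto. split; [apply Per; auto|].
  intros e He.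
  destruct (F7 (e/2) ltac:(lra)) as [T1 HT1].
  destruct (Hy (e/2) ltac:(lra)) as [T2 HT2].
  exists (Rmax T1 T2). intros t Ht HT.
  assert (T1 <= t) by (eapply Rle_trans; [apply Rmax_l|exact HT]).
  assert (T2 <= t) by (eapply Rle_trans; [apply Rmax_r|exact HT]).
  specialize (HT1 t Ht ltac:(auto)). specialize (HT2 t Ht ltac:(auto)).
  unfold rhoX, skew. simpl.
  rewrite Rabs_right in HT2 by (apply Rle_ge; auto).
  rewrite Rabs_right by (apply Rle_ge; generalize (Rabs_pos (phi t u0 y0 - phi t M q)) (Dpos (sigma t y0) (sigma t q)); lra).
  lra.
Qed.
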